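(* Let $G$ be a $(P_6,C_4)$-free graph and let $X$, $Y$, $\{c\}$ be pairwise disjoint subsets of $V(G)$ such that: $Y$ is a clique and every vertex of $X$ has a neighbor in $Y$; $c$ is complete to $X$ and anticomplete to $Y$; and either $G[X]$ is not connected, or there exist vertices $c',c''\in V(G)\setminus(X\cup Y)$ such that $c'$ is complete to $Y$ and anticomplete to $X$, $c''$ is anticomplete to $X\cup Y$, and $c'c''\in E(G)$. Then $G[X]$ is $(P_4,2P_3)$-free.
   Context: $2P_3$ is the disjoint union of two paths on three vertices. Complete/anticomplete: all edges / no edges between the two sets. *)

(* Defs.v *)
From mathcomp Require Import all_boot.
Set Implicit Arguments. Unset Strict Implicit. Unset Printing Implicit Defensive.

Definition simple_graph (T : finType) (e : rel T) : Prop :=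
  symmetric e /\ irreflexive e.

Definition path_rel (k : nat) : rel 'I_k :=
  fun i j => (i.+1 == j :> nat) || (j.+1 == i :> nat).

Definition C4_rel : rel 'I_4 :=
  fun i j => (j == (i.+1 %% 4) :> nat) || (i == (j.+1 %% 4) :> nat).

(* 2P_3 : paths 0-1-2 and 3-4-5 *)
Definition twoP3_rel : rel 'I_6 :=
  fun i j => @path_rel 6 i j
             && ~~ ((i == 2 :> nat) && (j == 3 :> nat))
             && ~~ ((i == 3 :> nat) && (j == 2 :> nat)).

Definition has_induced (T : finType) (e : rel T) (S : {set T})
  (k : nat) (h : rel 'I_k) : Prop :=
  exists f : 'I_k -> T,
    injective f /\ (forall i, f i \in S) /\ (forall i j, e (f i) (f j) = h i j).

Definition free_in (T : finType) (e : rel T) (S : {set T})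
  (k : nat) (h : rel 'I_k) : Prop := ~ has_induced e S h.

Definition connected_in (T : finType) (e : rel T) (S : {set T}) : Prop :=
  forall x y, x \in S -> y \in S ->
    connect [rel u v | e u v && (u \in S) && (v \in S)] x y.

Definition complete_to (T : finType) (e : rel T) (v : T) (S : {set T}) : Prop :=
  forall x, x \in S -> e v x.
Definition anticomplete_to (T : finType) (e : rel T) (v : T) (S : {set T}) : Prop :=
  forall x, x \in S -> ~~ e v x.
Definition is_clique (T : finType) (e : rel T) (S : {set T}) : Prop :=
  forall x y, x \in S -> y \in S -> x != y -> e x y.

(* Main.v *)
Require Import Defs.
From mathcomp Require Import all_boot.

Section Aux.
Variables (T : finType) (e : rel T).
Hypotheses (sym : symmetric e) (irr : irreflexive e).

Ltac edge_tac :=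
  first [ exact: irr | assumption | (rewrite sym; assumption)
        | (apply/negbTE; assumption) | (rewrite sym; apply/negbTE; assumption) ].

Ltac contr_tac :=
  match goal with
  | H : is_true (e ?x ?x) |- _ => by rewrite irr in H
  | H : is_true (?x != ?x) |- _ => by rewrite eqxx in H
  | H1 : is_true (e ?x ?y), H2 : is_true (~~ e ?x ?y) |- _ => by rewrite H1 in H2
  | H1 : is_true (e ?x ?y), H2 : is_true (~~ e ?y ?x) |- _ => by rewrite sym H1 in H2
  end.

Lemma mkP6 v0 v1 v2 v3 v4 v5 :
  e v0 v1 -> e v1 v2 -> e v2 v3 -> e v3 v4 -> e v4 v5 ->
  ~~ e v0 v2 -> ~~ e v0 v3 -> ~~ e v0 v4 -> ~~ e v0 v5 -> ~~ e v1 v3 ->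
  ~~ e v1 v4 -> ~~ e v1 v5 -> ~~ e v2 v4 -> ~~ e v2 v5 -> ~~ e v3 v5 ->
  has_induced e [set: T] (@path_rel 6).
Proof.
move=> *.
exists (fun i : 'I_6 => nth v0 [:: v0; v1; v2; v3; v4; v5] i); split; last split.
- move=> [[|[|[|[|[|[|//]]]]]] Hi] [[|[|[|[|[|[|//]]]]]] Hj] /=;
    try (by move=> _; apply/val_inj); move=> E; subst; contr_tac.
- by move=> i; rewrite in_setT.
- move=> [[|[|[|[|[|[|//]]]]]] Hi] [[|[|[|[|[|[|//]]]]]] Hj];
    rewrite /path_rel /=; edge_tac.
Qed.

Lemma mkC4 v0 v1 v2 v3 :
  e v0 v1 -> e v1 v2 -> e v2 v3 -> e v3 v0 -> ~~ e v0 v2 -> ~~ e v1 v3 ->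
  v0 != v2 -> v1 != v3 ->
  has_induced e [set: T] C4_rel.
Proof.
move=> *.
exists (fun i : 'I_4 => nth v0 [:: v0; v1; v2; v3] i); split; last split.
- move=> [[|[|[|[|//]]]] Hi] [[|[|[|[|//]]]] Hj] /=;
    try (by move=> _; apply/val_inj); move=> E; subst; contr_tac.
- by move=> i; rewrite in_setT.
- move=> [[|[|[|[|//]]]] Hi] [[|[|[|[|//]]]] Hj];
    rewrite /C4_rel /=; edge_tac.
Qed.

End Aux.

Notation o4 k := (@Ordinal 4 k isT) (only parsing).
Notation o6 k := (@Ordinal 6 k isT) (only parsing).

Theorem lemma2p4 (T : finType) (e : rel T) (X Y : {set T}) (c : T) :
  simple_graph e ->
  free_in e [set: T] (@path_rel 6) ->
  free_in e [set: T] C4_rel ->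
  [disjoint X & Y] -> c \notin X -> c \notin Y ->
  is_clique e Y ->
  (forall x, x \in X -> exists2 y, y \in Y & e x y) ->
  complete_to e c X -> anticomplete_to e c Y ->
  (~ connected_in e X \/
   exists c' c'', c' \notin X :|: Y /\ c'' \notin X :|: Y /\
     complete_to e c' Y /\ anticomplete_to e c' X /\
     anticomplete_to e c'' (X :|: Y) /\ e c' c'') ->
  free_in e X (@path_rel 4) /\ free_in e X twoP3_rel.
Proof.
move=> [sym irr] noP6 noC4 dXY cX cY clY XY cXc cYc hyp.
have C4 : forall a b y, a \in X -> b \in X -> y \in Y -> a != b -> ~~ e a b ->
    e a y -> e b y -> False.
  move=> a b y aX bX yY ab nab ay b_y; apply: noC4.
  apply: (@mkC4 T e sym irr c a y b) => //.
  - exact: cXc.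
  - by rewrite sym.
  - by rewrite sym cXc.
  - exact: cYc.
  - by apply/eqP=> E; rewrite E yY in cY.
have P6 := fun v0 v1 v2 v3 v4 v5 h1 h2 h3 h4 h5 n1 n2 n3 n4 n5 n6 n7 n8 n9 n10 =>
  noP6 (@mkP6 T e sym irr v0 v1 v2 v3 v4 v5 h1 h2 h3 h4 h5 n1 n2 n3 n4 n5 n6 n7 n8 n9 n10).
split.
- move=> [f [fi [fX Hf]]].
  have [y1 y1Y x1y1] := XY _ (fX (o4 0)).
  have dd : forall i j, i != j -> f i != f j by move=> i j; rewrite (inj_eq fi).
  have ny13 : ~~ e y1 (f (o4 2)).
    apply/negP => h; apply: (C4 (f (o4 0)) (f (o4 2)) y1) => //; first exact: dd.
      by rewrite Hf.
    by rewrite sym.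
  have ny14 : ~~ e y1 (f (o4 3)).
    apply/negP => h; apply: (C4 (f (o4 0)) (f (o4 3)) y1) => //; first exact: dd.
      by rewrite Hf.
    by rewrite sym.
  have core : forall p q, e p q -> e q y1 -> ~~ e p y1 -> (forall i, ~~ e p (f i)) ->
      (forall i, ~~ e q (f i)) -> False.
    move=> p q pq qy py pf qf.
    case: (boolP (e y1 (f (o4 1)))) => h.
    - by apply: (P6 p q y1 (f (o4 1)) (f (o4 2)) (f (o4 3)));
        first [assumption | exact: pf | exact: qf | by rewrite Hf].
    - apply: (P6 p q y1 (f (o4 0)) (f (o4 1)) (f (o4 2)));
        first [assumption | exact: pf | exact: qf | by rewrite Hf | by rewrite sym].
  case: hyp => [nc | [c' [c'' [c'n [c''n [c'Y [c'X [c''XY cc]]]]]]]].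
  + pose R := [rel u v | e u v && (u \in X) && (v \in X)].
    have Rsym : symmetric R.
      by move=> u v /=; rewrite sym; case: (u \in X); case: (v \in X); rewrite ?andbF.
    have c01 : connect R (f (o4 0)) (f (o4 1)) by apply: connect1; rewrite /= Hf !fX.
    have c12 : connect R (f (o4 1)) (f (o4 2)) by apply: connect1; rewrite /= Hf !fX.
    have c23 : connect R (f (o4 2)) (f (o4 3)) by apply: connect1; rewrite /= Hf !fX.
    have cx : forall i, connect R (f (o4 0)) (f i).
      move=> [[|[|[|[|//]]]] Hi].
      * by rewrite (_ : Ordinal Hi = o4 0) //; apply: val_inj.
      * by rewrite (_ : Ordinal Hi = o4 1) //; apply: val_inj.
      * rewrite (_ : Ordinal Hi = o4 2); last exact: val_inj.
        exact: connect_trans c01 c12.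
      * rewrite (_ : Ordinal Hi = o4 3); last exact: val_inj.
        exact: connect_trans (connect_trans c01 c12) c23.
    have [z zX nz] : exists2 z, z \in X & ~~ connect R (f (o4 0)) z.
      case: (pickP [pred z | (z \in X) && ~~ connect R (f (o4 0)) z]) => [z /andP[]|none].
        by exists z.
      exfalso; apply: nc => u v uX vX.
      have h w : w \in X -> connect R (f (o4 0)) w.
        by move=> wX; have := none w; rewrite /= wX /=; move/negbFE.
      apply: (connect_trans _ (h v vX)); rewrite (sym_connect_sym Rsym); exact: h.
    have nzi : forall i, ~~ e z (f i).
      move=> i; apply/negP=> h; move/negP: nz; apply; apply: (connect_trans (cx i)); apply: connect1; by rewrite /= sym h fX zX.

    have zi : forall i, z != f i.
      by move=> i; apply/eqP => E; move: nz; rewrite E cx.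
    have [yz yzY zyz] := XY z zX.
    have nyz : forall i, ~~ e yz (f i).
      move=> i; apply/negP=> h; apply: (C4 z (f i) yz) => //; by rewrite sym.
    have zy1 : ~~ e z y1.
      apply/negP => h; apply: (C4 (f (o4 0)) z y1) => //.
        by rewrite eq_sym.
      by rewrite sym.
    have yzy1 : e yz y1.
      apply: clY => //; apply/eqP => E; move: (nyz (o4 0)); by rewrite E sym x1y1.
    exact: (core z yz).
  + apply: (core c'' c').
    * by rewrite sym.
    * exact: c'Y.
    * by apply: c''XY; rewrite inE y1Y orbT.
    * by move=> i; apply: c''XY; rewrite inE fX.
    * by move=> i; exact: c'X (fX i).
- move=> [f [fi [fX Hf]]].
  have dd : forall i j, i != j -> f i != f j by move=> i j; rewrite (inj_eq fi).
  have ncommon : forall i j yy, i != j -> ~~ e (f i) (f j) -> yy \in Y ->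
      e (f i) yy -> ~~ e (f j) yy.
    move=> i j yy ij nij yyY h; apply/negP => h'.
    by apply: (C4 (f i) (f j) yy) => //; exact: dd.
  have [y yY a2y] := XY _ (fX (o6 1)).
  have [y' y'Y b2y'] := XY _ (fX (o6 4)).
  have fin : forall ia ib : 'I_6, twoP3_rel ia (o6 1) -> twoP3_rel (o6 4) ib ->
      ~~ twoP3_rel ia (o6 4) -> ~~ twoP3_rel ia ib -> ~~ twoP3_rel (o6 1) ib ->
      ia != o6 4 -> o6 1 != ib -> ~~ e (f ia) y -> ~~ e (f ib) y' -> False.
    move=> ia ib h1 h2 n1 n2 n3 d1 d2 ny ny'.
    have yy' : e y y'.
      apply: clY => //; apply/eqP => E.
      by move: (ncommon (o6 1) (o6 4) y isT ltac:(by rewrite Hf) yY a2y); rewrite E b2y'.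
    apply: (P6 (f ia) (f (o6 1)) y y' (f (o6 4)) (f ib)) => //;
      first [ by rewrite Hf | by rewrite sym | by rewrite sym Hf
            | by apply: (ncommon (o6 4)); first [done | (rewrite eq_sym; done) | (rewrite Hf; done) | (rewrite sym Hf; done)]
            | by rewrite sym; apply: (ncommon (o6 4)); first [done | (rewrite eq_sym; done) | (rewrite Hf; done) | (rewrite sym Hf; done)]
            | by apply: (ncommon (o6 1)); first [done | (rewrite eq_sym; done) | (rewrite Hf; done) | (rewrite sym Hf; done)]
            | by rewrite sym; apply: (ncommon (o6 1)); first [done | (rewrite eq_sym; done) | (rewrite Hf; done) | (rewrite sym Hf; done)]
            | idtac ].
  have [ia [Hia _ _ ny]] : exists ia : 'I_6, [/\ ia == o6 0 \/ ia == o6 2,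
        twoP3_rel ia (o6 1), ~~ twoP3_rel ia (o6 4) & ~~ e (f ia) y].
    case: (boolP (e (f (o6 0)) y)) => h.
      exists (o6 2); split => //; first by right.
      by apply: (ncommon (o6 0)); rewrite ?Hf.
    by exists (o6 0); split => //; left.
  have [ib [Hib ny']] : exists ib : 'I_6, (ib == o6 3 \/ ib == o6 5) /\ ~~ e (f ib) y'.
    case: (boolP (e (f (o6 3)) y')) => h.
      exists (o6 5); split; first by right.
      by apply: (ncommon (o6 3)); rewrite ?Hf.
    by exists (o6 3); split => //; left.
  by case: Hia => /eqP Ea; case: Hib => /eqP Eb; subst ia ib; apply: (fin _ _ _ _ _ _ _ _ _ ny ny').
Qed.
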